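(* Consider a one-parameter family of admissible vector fields of a feedforward network, with internal phase space $V$. If $V=\mathbb R$, then no linear admissible map (in particular no linearization at a fully synchronous equilibrium) has a pair of non-real complex conjugate eigenvalues; hence in a one-parameter bifurcation only real eigenvalues can cross the imaginary axis. On the other hand, if $\dim V\ge 2$, there are linear admissible maps with non-real complex conjugate eigenvalues, so that a one-parameter bifurcation in which a pair of complex conjugate eigenvalues crosses the imaginary axis is possible.
   Context: A homogeneous coupled cell network with asymmetric inputs consists of a finite set of cells $C$ and a set $\Sigma=\{\sigma_1,\dots,\sigma_n\}$ of pairwise distinct maps $\sigma\colon C\to C$ with $\sigma_1=\mathrm{Id}_C$; there is an arrow of type $\sigma$ from $q$ to $p$ iff $\sigma(p)=q$. A path from $p$ to $q$ is a set $\{p_1,\dots,p_k\}$ of pairwise distinct cells with $p_1=p$, $p_k=q$ and $\tau_j(p_{j+1})=p_j$ for some $\tau_j\in\Sigma$. A cycle of length $k$ is such a path with additionally $\tau(p_1)=p_k$ for some $\tau\in\Sigma$; the network is feedforward if it has no cycles of length $\ge2$. For a finite-dimensional real vector space $V$ (internal phase space) and $f\colon V^n\times\mathbb R\to V$, the admissible vector fields are $\gamma_f(x,\lambda)_p=f(x_{\sigma_1(p)},\dots,x_{\sigma_n(p)},\lambda)$ on $V^N$; linear admissible maps are $\gamma_{\mathfrak l}$ with $\mathfrak l\colon V^n\to V$ linear. *)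

(* Defs.v *)
From HB Require Import structures.
From mathcomp Require Import all_boot all_order all_algebra.
From mathcomp Require Import reals.
From mathcomp Require Import complex.
Set Implicit Arguments. Unset Strict Implicit. Unset Printing Implicit Defensive.
Import Order.TTheory GRing.Theory Num.Theory.
Local Open Scope ring_scope.

(* A homogeneous network with asymmetric inputs: cells C (a finType), and
   Sigma = (sigma_0, ..., sigma_n) given by sigma : 'I_n.+1 -> (C -> C);
   the paper's sigma_1 = Id is our sigma ord0, and "pairwise distinct" is
   injectivity of sigma (stated in the theorem). *)

(* [net_step sigma x y] : there is tau in Sigma with tau y = x
   (the path condition tau_j(p_{j+1}) = p_j for x = p_j, y = p_{j+1}). *)
Definition net_step (C : finType) (n : nat) (sigma : 'I_n.+1 -> C -> C)
  (x y : C) : Prop := exists i : 'I_n.+1, sigma i y = x.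

(* p_1, ..., p_k is encoded as p 0, ..., p (k-1).
   A path of k pairwise distinct cells. *)
Definition net_path (C : finType) (n : nat) (sigma : 'I_n.+1 -> C -> C)
  (k : nat) (p : nat -> C) : Prop :=
  (0 < k)%N /\
  (forall i j, i < k -> j < k -> p i = p j -> i = j)%N /\
  (forall j, (j.+1 < k)%N -> net_step sigma (p j) (p j.+1)).

Definition net_cycle (C : finType) (n : nat) (sigma : 'I_n.+1 -> C -> C)
  (k : nat) (p : nat -> C) : Prop :=
  net_path sigma k p /\ net_step sigma (p k.-1) (p 0%N).

Definition feedforward (C : finType) (n : nat) (sigma : 'I_n.+1 -> C -> C)
  : Prop :=
  forall (k : nat) (p : nat -> C), (2 <= k)%N -> ~ net_cycle sigma k p.

(* Internal phase space V = K^d (row vectors 'rV[K]_d, d = dim V).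
   A linear map l : V^{n+1} -> V is given by matrices L i (acting on row
   vectors):  l(v_0, ..., v_n) = \sum_i v_i *m L i. *)
Definition adm_lin (K : pzRingType) (C : finType) (n d : nat)
  (sigma : 'I_n.+1 -> C -> C) (L : 'I_n.+1 -> 'M[K]_d)
  (x : C -> 'rV[K]_d) (p : C) : 'rV[K]_d :=
  \sum_(i < n.+1) x (sigma i p) *m L i.

(* lam in C = R[i] is an eigenvalue of the real linear map gamma_l on V^C
   (i.e. of its complexification): there is a nonzero complex vector
   z in (C^d)^C with gamma_l z = lam z. *)
Definition adm_eigenvalue (R : realType) (C : finType) (n d : nat)
  (sigma : 'I_n.+1 -> C -> C) (L : 'I_n.+1 -> 'M[R]_d) (lam : R[i]) : Prop :=
  exists z : C -> 'rV[R[i]]_d,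
    (exists p, z p != 0) /\
    forall p, adm_lin sigma (fun i => map_mx (real_complex R) (L i)) z p
              = lam *: z p.

(* Main.v *)
Require Import Defs.
From HB Require Import structures.
From mathcomp Require Import all_boot all_order all_algebra.
From mathcomp Require Import reals.
From mathcomp Require Import complex.
From mathcomp Require Import zify.

Lemma ff_min (C : finType) (n : nat) (sigma : 'I_n.+1 -> C -> C) (S : pred C) p0 :
  feedforward sigma -> p0 \in S ->
  exists2 p, p \in S & forall i, sigma i p != p -> sigma i p \notin S.
Proof.
move=> ff Sp0.
have [p /andP[Sp /forallP H]|] := pickP [pred p | (p \in S) &&
      [forall i, (sigma i p != p) ==> (sigma i p \notin S)]].
  by exists p => // i; move/implyP: (H i).
move=> Hno.
pose f p := if [pick i | (sigma i p != p) && (sigma i p \in S)] is Some i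
            then sigma i p else p.
have fP p : p \in S -> [/\ f p \in S, f p != p & net_step sigma (f p) p].
  move=> Sp; rewrite /f; case: pickP => [i /andP[h1 h2]|H0].
    by split => //; exists i.
  move: (Hno p) => /=; rewrite Sp /=; move/negbT/forallPn => [j].
  by rewrite negb_imply negbK => /andP[h1 h2]; move: (H0 j); rewrite h1 h2.
pose q m := iter m f p0.
have Sq m : q m \in S by elim: m => [|m IH] //=; case: (fP _ IH).
have [a [b [ab qab]]] : exists a b, (a < b)%N /\ q a = q b.
  pose g (m : 'I_#|C|.+1) := q m.
  have : ~~ injectiveb g.
    apply/negP => /injectiveP /leq_card; rewrite card_ord.
    by rewrite ltnn.
  move/injectivePn => [x [y xy gxy]].
  have : val x != val y by [].
  rewrite neq_ltn => /orP[h|h]; [exists x, y | exists y, x]; by split.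
pose P b := [exists a : 'I_b, q a == q b].
have exP : exists b, P b.
  by exists b; apply/existsP; exists (Ordinal ab); apply/eqP.
have Pmin := ex_minnP exP.
move: Pmin => [b' /existsP[a' /eqP qa'] minb].
set a0 := nat_of_ord a'.
have a0b : (a0 < b')%N by apply: ltn_ord.
have dist i j : (i < b')%N -> (j < b')%N -> q i = q j -> i = j.
  move=> ib jb qij; apply/eqP; apply: contraT; rewrite neq_ltn => /orP[h|h].
    have : (b' <= j)%N by apply: minb; apply/existsP; exists (Ordinal h); apply/eqP.
    by rewrite leqNgt jb.
  have : (b' <= i)%N by apply: minb; apply/existsP; exists (Ordinal h); apply/eqP.
  by rewrite leqNgt ib.
pose k := (b' - a0)%N.
pose p j := q (b'.-1 - j)%N.
exfalso; apply: (ff k p).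
  have : (k != 1)%N.
    apply/eqP => k1.
    have e : b' = a0.+1 by rewrite /k in k1; lia.
    case: (fP _ (Sq a0)) => _ /eqP + _; apply.
    by rewrite [in RHS]qa' e.
  rewrite /k; lia.
split; [split; [|split]|].
- rewrite /k; lia.
- move=> i j ik jk /dist; rewrite /k in ik jk.
  move=> H; have := H ltac:(lia) ltac:(lia); lia.
- move=> j jk; rewrite /p /k in jk *.
  have -> : (b'.-1 - j = (b'.-1 - j.+1).+1)%N by lia.
  by case: (fP _ (Sq (b'.-1 - j.+1)%N)).
- rewrite /p /k.
  have -> : (b'.-1 - (b' - a0).-1 = a0)%N by lia.
  rewrite subn0 qa'.
  have -> : b' = (b'.-1).+1 by lia.
  by case: (fP _ (Sq b'.-1)).
Qed.
Import Order.TTheory GRing.Theory Num.Theory.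
Local Open Scope ring_scope.

Section Helpers2.
Local Open Scope complex_scope.

Lemma part1 (R : realType) (C : finType) (n : nat)
  (sigma : 'I_n.+1 -> C -> C) : feedforward sigma ->
  (forall (L : 'I_n.+1 -> 'M[R]_1) (lam : R[i]),
      adm_eigenvalue sigma L lam -> complex.Im lam = 0).
Proof.
move=> ff L lam [z [[p0 nz0] H]].
have [p Sp Hp] := @ff_min _ _ sigma [pred p | z p != 0] p0 ff nz0.
have nz00 : z p 0 0 != 0.
  move: Sp; rewrite inE; apply: contra => /eqP h; apply/eqP/rowP => j.
  by rewrite ord1 h mxE.
move: (congr1 (fun M : 'rV[R[i]]_1 => M 0 0) (H p)).
rewrite /adm_lin summxE mxE.
under eq_bigr => i _ do rewrite mxE big_ord1 mxE.
set w := z p 0 0.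
have -> : \sum_(i < n.+1) z (sigma i p) 0 0 * (L i 0 0)%:C =
          w * (\sum_(i < n.+1) (if sigma i p == p then L i 0 0 else 0))%:C.
  rewrite rmorph_sum mulr_sumr; apply: eq_bigr => i _.
  case: eqP => [->|/eqP ne]; first by [].
  have := Hp i ne; rewrite inE negbK => /eqP ->.
  by rewrite mxE !mul0r rmorph0 mulr0.
move=> e.
have : lam = (\sum_(i < n.+1) (if sigma i p == p then L i 0 0 else 0))%:C.
  by apply: (mulIf nz00); rewrite -e mulrC.
by move=> ->.
Qed.

Lemma part2 (R : realType) (C : finType) (n : nat)
  (sigma : 'I_n.+1 -> C -> C) : (0 < #|C|)%N ->
  (forall d : nat, (2 <= d)%N ->
     exists (L : 'I_n.+1 -> 'M[R]_d) (lam : R[i]),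
       complex.Im lam != 0 /\ adm_eigenvalue sigma L lam /\
       adm_eigenvalue sigma L (conjc lam)).
Proof.
move=> /card_gt0P [c0 _].
case=> [|[|d]] // _.
pose i0 : 'I_d.+2 := ord0.
pose i1 : 'I_d.+2 := lift ord0 ord0.
pose M : 'M[R]_d.+2 := delta_mx i0 i1 - delta_mx i1 i0.
pose L := fun i : 'I_n.+1 => if i == ord0 then M else 0.
have key (lam : R[i]) : lam * lam = -1 -> adm_eigenvalue sigma L lam.
  move=> hl.
  pose v : 'rV[R[i]]_d.+2 := delta_mx 0 i0 + (- lam) *: delta_mx 0 i1.
  exists (fun _ => v); split.
    exists c0; rewrite /v; apply/eqP => /rowP /(_ ord0); rewrite !mxE /=.
    by rewrite mulr0 addr0 => /eqP; rewrite oner_eq0.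
  move=> p; rewrite /adm_lin big_ord_recl.
  rewrite big1 ?addr0; last first.
    by move=> i _; rewrite /L /= map_mx0 mulmx0.
  rewrite /L eqxx /M map_mxB !map_delta_mx.
  rewrite /v mulmxBr !mulmxDl -!scalemxAl !mul_delta_mx_cond /i0 /i1 /=.
  by rewrite !mulr1n !mulr0n scaler0 addr0 add0r !scaleNr opprK scalerDr scalerN scalerA hl scaleN1r opprK addrC.
exists L, 'i; split; first by rewrite /= oner_eq0.
have ci : conjc ('i : R[i]) = - 'i by apply/eqP; rewrite eq_complex /= oppr0 !eqxx.
split; apply: key; rewrite ?ci ?mulrNN -expr2 sqr_i //.
Qed.
End Helpers2.


Theorem theorem3p10 (R : realType) (C : finType) (n : nat)
  (sigma : 'I_n.+1 -> C -> C) :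
  (0 < #|C|)%N ->
  sigma ord0 = id ->
  injective sigma ->
  feedforward sigma ->
  (* V = R (d = 1): no linear admissible map has a non-real eigenvalue *)
  (forall (L : 'I_n.+1 -> 'M[R]_1) (lam : R[i]),
      adm_eigenvalue sigma L lam -> complex.Im lam = 0) /\
  (* dim V >= 2: some linear admissible map has a pair of non-real
     complex conjugate eigenvalues *)
  (forall d : nat, (2 <= d)%N ->
     exists (L : 'I_n.+1 -> 'M[R]_d) (lam : R[i]),
       complex.Im lam != 0 /\ adm_eigenvalue sigma L lam /\
       adm_eigenvalue sigma L (conjc lam)).
Proof.
move=> hC _ _ ff; split; first exact: (@part1 R C n sigma ff).
exact: (@part2 R C n sigma hC).
Qed.
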